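(* Let $N=pq$ with $p,q$ distinct primes. Let $d\in\mathbb{N}$ and $b_1,\dots,b_d\in\mathbb{Z}$. For each $i$ let $f_i=l_iX+c_i\in\mathbb{Z}[X]$ be a polynomial of degree $1$ with $f_i(b_i)=N$. If $\gcd(c_i,N)=1$ for every $i$ and $\gcd(b_j-b_k,N)=1$ for all $j,k\in\{1,\dots,d\}$ with $j\neq k$, then \[\nu\Big(\prod_{i=1}^d f_i\Big)=dp+dq-2d^2.\]
   Context: $Z_N=\{0,1,\dots,N-1\}$. For $g\in\mathbb{Z}[X]$, an element $x\in Z_N$ is called suitable for $g$ if $1<\gcd(g(x),N)<N$, and $\nu(g)$ denotes the number of $x\in Z_N$ suitable for $g$. *)

(* Defs.v *)
From mathcomp Require Import all_boot all_order all_algebra.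
Set Implicit Arguments. Unset Strict Implicit. Unset Printing Implicit Defensive.
Import GRing.Theory Num.Theory.
Local Open Scope ring_scope.

Definition suitable (N : nat) (g : {poly int}) (x : nat) : bool :=
  (1 < gcdn `|g.[x%:Z]|%N N < N)%N.

Definition nu (N : nat) (g : {poly int}) : nat :=
  #|[set x : 'I_N | suitable N g x]|.

(* Main.v *)
Require Import Defs.
From mathcomp Require Import all_boot all_order all_algebra.
From mathcomp Require Import ring.
Import GRing.Theory Num.Theory.
Local Open Scope ring_scope.

Lemma suit (p q m : nat) : prime p -> prime q -> p != q ->
  (1 < gcdn m (p * q) < p * q)%N = ((p %| m) != (q %| m))%N.
Proof.
move=> pp pq npq.
have cpq : coprime p q by rewrite prime_coprime // dvdn_prime2.
have N0 : (0 < p * q)%N by rewrite muln_gt0 !prime_gt0.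
have H1 : (gcdn m (p * q) < p * q)%N = ~~ ((p %| m) && (q %| m))%N.
  rewrite -Gauss_dvd // ltn_neqAle dvdn_leq ?dvdn_gcdr // andbT.
  congr negb; by apply/eqP/gcdn_idPr.
have H2 : (1 < gcdn m (p * q))%N = ((p %| m) || (q %| m))%N.
  have g0 : (0 < gcdn m (p * q))%N by rewrite gcdn_gt0 N0 orbT.
  have -> : (1 < gcdn m (p * q))%N = ~~ coprime (p * q) m.
    by rewrite coprime_sym /coprime; case: (gcdn m (p*q)) g0 => [|[|k]].
  by rewrite coprimeMl !prime_coprime // negb_and !negbK.
rewrite H1 H2; by case: (p %| m)%N; case: (q %| m)%N.
Qed.

Lemma cardsum (T : finType) (P : pred T) :
  #|[set x | P x]| = (\sum_(x : T) (P x : nat))%N.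
Proof.
rewrite -sum1_card big_mkcond /=; apply: eq_bigr => x _; rewrite inE.
by case: (P x).
Qed.

Lemma cardsum2 (T : finType) (A : {pred T}) :
  (\sum_(x : T) (x \in A : nat))%N = #|A|.
Proof.
rewrite -sum1_card [in RHS]big_mkcond /=; apply: eq_bigr => x _.
by case: (x \in A).
Qed.

Lemma prod_dvd (p d x : nat) (l c : nat -> int) : prime p ->
  (p %| `|(\prod_(i < d) ((l i)%:P * 'X + (c i)%:P)).[x%:Z]|)%N =
  [exists i : 'I_d, p %| `|(l i * x%:Z + c i)%R| ]%N.
Proof.
move=> pp.
rewrite horner_prod (big_morph absz abszM (erefl _)) Euclid_dvd_prod // big_orE.
by apply: eq_existsb => i; rewrite !hornerE.
Qed.

Lemma key (r N : nat) (l c b : int) (x : nat) : prime r -> (r %| N)%N ->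
  ~~ (r %| `|c|)%N -> l * b + c = N%:Z ->
  (r %| `|(l * x%:Z + c)%R|)%N = (x %% r == `|(b %% r)%Z|)%N.
Proof.
move=> pr rN rc E.
have r0 : (0 < r)%N by apply: prime_gt0.
have E2 : l * x%:Z + c = l * (x%:Z - b) + N%:Z by rewrite -E; ring.
have rl : ~~ (r %| `|l|)%N.
  apply: contra rc => rl.
  have -> : c = N%:Z - l * b by rewrite -E; ring.
  have : (r%:Z %| N%:Z - l * b)%Z.
    apply: rpredB; first by rewrite dvdzE /=.
    by apply: dvdz_mulr; rewrite dvdzE.
  by rewrite dvdzE.
rewrite E2.
have -> : (r %| `|(l * (x%:Z - b) + N%:Z)%R|)%N = (r%:Z %| l * (x%:Z - b))%Z.
  by rewrite -[LHS]/((r%:Z %| l * (x%:Z - b) + N%:Z)%Z) rpredDr // dvdzE.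
rewrite dvdzE abszM Euclid_dvdM // (negbTE rl) /=.
rewrite -[LHS]/((r%:Z %| x%:Z - b)%Z) -eqz_mod_dvd modz_nat.
have hb : 0 <= (b %% r)%Z by apply: modz_ge0; rewrite -lt0n.
rewrite -{1}(gez0_abs hb).
by apply/eqP/eqP => [[]|->].
Qed.

Lemma nodvd (p N : nat) (z : int) : prime p -> (p %| N)%N ->
  gcdz z N%:Z = 1 -> ~~ (p %| `|z|)%N.
Proof.
move=> pp pN /eqP; rewrite /gcdz /= => /eqP [g1].
apply/negP => h.
have : (p %| gcdn `|z| N)%N by rewrite dvdn_gcd h.
by rewrite g1 dvdn1 => /eqP p1; rewrite p1 in pp.
Qed.

Lemma rlt (z : int) {p : nat} : (0 < p)%N -> (`|(z %% p)%Z| < p)%N.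
Proof.
move=> p0.
have h1 : 0 <= (z %% p)%Z by apply: modz_ge0; rewrite -lt0n.
have h2 : (z %% p)%Z < p%:Z by apply: ltz_pmod; rewrite ltz_nat.
by rewrite -ltz_nat gez0_abs.
Qed.

Definition res {p : nat} (p0 : (0 < p)%N) {d} (b : nat -> int) (i : 'I_d) : 'I_p :=
  Ordinal (rlt (b i) p0 : (_ < p)%N).
Definition modo {p : nat} (p0 : (0 < p)%N) (x : nat) : 'I_p :=
  Ordinal (ltn_pmod x p0).

Lemma part (p N d : nat) (p0 : (0 < p)%N) (b l c : nat -> int) (x : nat) :
  prime p -> (p %| N)%N ->
  (forall i, (i < d)%N -> l i * b i + c i = N%:Z) ->
  (forall i, (i < d)%N -> gcdz (c i) N%:Z = 1) ->
  (p %| `|(\prod_(i < d) ((l i)%:P * 'X + (c i)%:P)).[x%:Z]|)%N =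
  (modo p0 x \in codom (@res p p0 d b)).
Proof.
move=> pp pN hE hc.
rewrite prod_dvd //.
apply/existsP/codomP => [[i Hi]|[i Hi]]; exists i.
- apply: val_inj => /=.
  by move: Hi; rewrite (key _ _ _ _ _ _ pp pN (nodvd _ _ _ pp pN (hc i (ltn_ord i))) (hE i (ltn_ord i))) => /eqP.
- rewrite (key _ _ _ _ _ _ pp pN (nodvd _ _ _ pp pN (hc i (ltn_ord i))) (hE i (ltn_ord i))).
  by apply/eqP; move: Hi => /(congr1 val).
Qed.

Lemma res_inj (p N d : nat) (p0 : (0 < p)%N) (b : nat -> int) :
  prime p -> (p %| N)%N ->
  (forall j k, (j < d)%N -> (k < d)%N -> j != k ->
     gcdz (b j - b k) N%:Z = 1) ->
  injective (@res p p0 d b).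
Proof.
move=> pp pN hb j k /(congr1 val) /= h.
apply/eqP; apply/negPn/negP => jk.
have jk' : (j : nat) != k by [].
have := nodvd _ _ _ pp pN (hb j k (ltn_ord j) (ltn_ord k) jk').
have h1 : 0 <= (b j %% p)%Z by apply: modz_ge0; rewrite -lt0n.
have h2 : 0 <= (b k %% p)%Z by apply: modz_ge0; rewrite -lt0n.
have e : (b j %% p)%Z = (b k %% p)%Z by rewrite -(gez0_abs h1) -(gez0_abs h2) h.
have : (b j == b k %[mod p])%Z by apply/eqP.
by rewrite eqz_mod_dvd dvdzE /= => ->.
Qed.

Theorem theorem2p9 (p q : nat) (d : nat) (b l c : nat -> int) :
  prime p -> prime q -> p != q ->
  (forall i, (i < d)%N -> l i != 0) ->
  (forall i, (i < d)%N -> l i * b i + c i = (p * q)%:Z) ->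
  (forall i, (i < d)%N -> gcdz (c i) (p * q)%:Z = 1) ->
  (forall j k, (j < d)%N -> (k < d)%N -> j != k ->
     gcdz (b j - b k) (p * q)%:Z = 1) ->
  (nu (p * q) (\prod_(i < d) ((l i)%:P * 'X + (c i)%:P)))%:Z =
    (d * p)%:Z + (d * q)%:Z - 2 * (d%:Z) ^+ 2.
Proof.
move=> pp pq npq _ hE hc hb.
have p0 : (0 < p)%N by apply: prime_gt0.
have q0 : (0 < q)%N by apply: prime_gt0.
have pN : (p %| p * q)%N by apply: dvdn_mulr.
have qN : (q %| p * q)%N by apply: dvdn_mull.
have cpq : coprime p q by rewrite prime_coprime // dvdn_prime2.
set gp := @res p p0 d b.
set gq := @res q q0 d b.
set G := fun y : 'I_p * 'I_q => ((y.1 \in codom gp) != (y.2 \in codom gq) : nat).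
pose f := fun x : 'I_(p * q) => (modo p0 x, modo q0 x).
have finj : injective f.
  move=> x y [= hp hq].
  apply: val_inj => /=.
  rewrite -(modn_small (ltn_ord x)) -(modn_small (ltn_ord y)); apply/eqP.
  by rewrite chinese_remainder //; apply/andP; split; apply/eqP.
have fbij : bijective f by apply: inj_card_bij => //; rewrite card_prod !card_ord.
have E1 : nu (p * q) (\prod_(i < d) ((l i)%:P * 'X + (c i)%:P)) = (\sum_y G y)%N.
  rewrite /nu cardsum (reindex f) /=; last exact: onW_bij.
  apply: eq_bigr => x _.
  by rewrite /suitable suit // (part _ _ _ p0 _ _ _ _ pp pN hE hc) (part _ _ _ q0 _ _ _ _ pq qN hE hc).
have S1 : (\sum_(a : 'I_p) (a \in codom gp : nat))%N = d.
  by rewrite cardsum2 card_codom ?card_ord //; apply: (res_inj _ _ _ p0 _ pp pN hb).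
have S2 : (\sum_(a : 'I_q) (a \in codom gq : nat))%N = d.
  by rewrite cardsum2 card_codom ?card_ord //; apply: (res_inj _ _ _ q0 _ pq qN hb).
have E2 : (\sum_y G y + 2 * (d * d) = d * q + p * d)%N.
  have -> : (\sum_y G y = \sum_(a : 'I_p) \sum_(b : 'I_q) G (a, b))%N by rewrite pair_bigA; apply: eq_bigr => -[].
  have X : (\sum_(a : 'I_p) \sum_(b : 'I_q) 2 * ((a \in codom gp) * (b \in codom gq)) = 2 * ((\sum_(a : 'I_p) (a \in codom gp : nat)) * (\sum_(b : 'I_q) (b \in codom gq : nat))))%N.
    rewrite big_distrl /= big_distrr /=; apply: eq_bigr => a _.
    rewrite big_distrr /= big_distrr /=; apply: eq_bigr => b' _; ring.
  rewrite S1 S2 in X.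
  have Y : (\sum_(a : 'I_p) \sum_(b : 'I_q) ((a \in codom gp) + (b \in codom gq)) = (\sum_(a : 'I_p) (a \in codom gp : nat)) * q + p * (\sum_(b : 'I_q) (b \in codom gq : nat)))%N.
    transitivity (\sum_(a : 'I_p) ((a \in codom gp) * q + \sum_(b : 'I_q) (b \in codom gq : nat)))%N.
      by apply: eq_bigr => a _; rewrite big_split /= sum_nat_const card_ord mulnC.
    by rewrite big_split /= -big_distrl /= sum_nat_const card_ord.
  rewrite S1 S2 in Y.
  rewrite -X -Y.
  rewrite -big_split /=; apply: eq_bigr => a _; rewrite -big_split /=; apply: eq_bigr => b' _.
  rewrite /G /=.
  by case: (a \in codom gp); case: (b' \in codom gq).
rewrite E1.
have -> : (\sum_y G y)%N = (d * q + p * d - 2 * (d * d))%N by rewrite -E2 addnK.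
rewrite -subzn; last by rewrite -E2 leq_addl.
rewrite !PoszD !PoszM expr2; ring.
Qed.
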